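(* Let $M$ be an ordinal monoid with merge. For every $a\in M$ there exists an FO-approximant of $\pi$ over $a^{\mathrm{ord}}$, the set of all countable ordinal words (including the empty word) all of whose letters are $a$.
   Context: Countable ordinal words over $\Sigma$: maps $w\colon\alpha\to\Sigma$, $\alpha$ a countable ordinal; $\Sigma^{\mathrm{ord}}$ their set. An ordinal monoid: set $M$ with $\pi\colon M^{\mathrm{ord}}\to M$, $\pi(x)=x$ on one-letter words, generalised associativity; $1=\pi(\varepsilon)$, $x\cdot y=\pi(xy)$, $x^\omega=\pi(xxx\cdots)$; ordered by $\le$ if $u\le v$ letterwise implies $\pi(u)\le\pi(v)$. $x^!$ idempotent power, $x^{!+k}$ eventual value of $x^{n!+k}$ in a finite semigroup. Ordinal monoid with merge: $(M,1,\le,\cdot,-^\omega,-^\sharp)$, $M$ finite, $(M,1,\le,\cdot,-^\omega)$ the presentation of an ordered finite ordinal monoid, $-^\sharp$ monotone with $a^{!+k}\le a^\sharp$, $(a^!)^\sharp=a^!$, $a^\sharp a^\sharp=(a^\sharp)^\sharp=a^\sharp$, $(ab)^\sharp=a(ba)^\sharp b$. FO logic over alphabet $M$ (atoms $x<y$, $a(x)$); FO-definable languages and maps (preimages FO-definable). For FO-definable $L\subseteq M^{\mathrm{ord}}$, an FO-approximant of $\pi$ over $L$ is an FO-definable $\rho\colon L\to M$ with $\pi(u)\le\rho(u)$ for all $u\in L$. *)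

(* Defs.v *)
From mathcomp Require Import all_boot.
Set Implicit Arguments. Unset Strict Implicit. Unset Printing Implicit Defensive.

(** It is a countable ordinal word when the relation strictly well-orders D.
   Every countable ordinal is the order type of such a (D, <). *)
Record rword (S : Type) := RWord {
  wdom : nat -> Prop;
  word : nat -> nat -> Prop;
  wlab : nat -> S }.

Definition is_word S (u : rword S) : Prop :=
  [/\ (forall i, wdom u i -> ~ word u i i),
      (forall i j k, wdom u i -> wdom u j -> wdom u k ->
          word u i j -> word u j k -> word u i k),
      (forall i j, wdom u i -> wdom u j -> i = j \/ word u i j \/ word u j i)
    & (forall P : nat -> Prop, (forall i, P i -> wdom u i) -> (exists i, P i) ->
          exists i, P i /\ forall j, P j -> ~ word u j i)].

(** Isomorphism of labelled linear orders (words are taken up to it). *)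
Definition word_iso S (u v : rword S) : Prop :=
  exists f : nat -> nat,
    [/\ (forall i, wdom u i -> wdom v (f i)),
        (forall j, wdom v j -> exists2 i, wdom u i & f i = j),
        (forall i j, wdom u i -> wdom u j -> (word u i j <-> word v (f i) (f j)))
      & (forall i, wdom u i -> wlab u i = wlab v (f i))].

Definition restrict S (u : rword S) (P : nat -> Prop) : rword S :=
  RWord (fun i => wdom u i /\ P i) (word u) (wlab u).

Definition ordinal_monoid (M : Type) (pi : rword M -> M) : Prop :=
  [/\ (* pi is a function on abstract words *)
      (forall u v, is_word u -> is_word v -> word_iso u v -> pi u = pi v),
      (forall u i, is_word u -> wdom u i -> (forall j, wdom u j -> j = i) ->
          pi u = wlab u i)
    & (* generalised associativity: pi(prod_{j in E} u_j) = pi(prod_{j in E} pi(u_j)),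
         the factor u_j being the fibre of a monotone map f from u to the ordinal (E,R) *)
      (forall (u : rword M) (E : nat -> Prop) (R : nat -> nat -> Prop) (f : nat -> nat),
          is_word u -> is_word (RWord E R (fun _ => tt)) ->
          (forall i, wdom u i -> E (f i)) ->
          (forall i j, wdom u i -> wdom u j -> word u i j -> R (f i) (f j) \/ f i = f j) ->
          pi u = pi (RWord E R (fun j => pi (restrict u (fun i => f i = j)))))].

Definition ordered_om (M : Type) (pi : rword M -> M) (le : M -> M -> bool) : Prop :=
  [/\ (forall x, le x x),
      (forall x y z, le x y -> le y z -> le x z),
      (forall x y, le x y -> le y x -> x = y)
    & (forall u v : rword M, is_word u -> wdom u = wdom v -> word u = word v ->
          (forall i, wdom u i -> le (wlab u i) (wlab v i)) -> le (pi u) (pi v))].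

Definition om_one (M : Type) (pi : rword M -> M) (x0 : M) : M :=
  pi (RWord (fun _ => False) (fun i j => i < j) (fun _ => x0)).

Definition om_mul (M : Type) (pi : rword M -> M) (x y : M) : M :=
  pi (RWord (fun i => i < 2) (fun i j => i < j) (fun i => if i == 0 then x else y)).

Definition om_omega (M : Type) (pi : rword M -> M) (x : M) : M :=
  pi (RWord (fun _ => True) (fun i j => i < j) (fun _ => x)).

Fixpoint om_pow (M : Type) (pi : rword M -> M) (x : M) (n : nat) : M :=
  match n with
  | 0 => om_one pi x
  | n'.+1 => om_mul pi x (om_pow pi x n')
  end.

(** x^{!+k}: eventual value of x^{n!+k}; in a finite semigroup of size |M| it is x^{|M|!+k}. *)
Definition om_bang_plus (M : finType) (pi : rword M -> M) (x : M) (k : nat) : M :=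
  om_pow pi x (#|M|`! + k).

(** x^!: the idempotent power of x. *)
Definition om_bang (M : finType) (pi : rword M -> M) (x : M) : M :=
  om_bang_plus pi x 0.

Definition merge_axioms (M : finType) (pi : rword M -> M) (le : M -> M -> bool)
    (sharp : M -> M) : Prop :=
  [/\ (forall a b, le a b -> le (sharp a) (sharp b)),
      (forall a k, le (om_bang_plus pi a k) (sharp a)),
      (forall a, sharp (om_bang pi a) = om_bang pi a),
      (forall a, om_mul pi (sharp a) (sharp a) = sharp a /\ sharp (sharp a) = sharp a)
    & (forall a b, sharp (om_mul pi a b) = om_mul pi a (om_mul pi (sharp (om_mul pi b a)) b))].

Inductive fo (S : Type) :=
| FLt of nat & nat
| FEq of nat & nat
| FLab of S & nat
| FFalse
| FNot of fo S
| FAnd of fo S & fo S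
| FEx of nat & fo S.

Arguments FFalse {S}.

Fixpoint fo_sat S (u : rword S) (nu : nat -> nat) (phi : fo S) : Prop :=
  match phi with
  | FLt x y => word u (nu x) (nu y)
  | FEq x y => nu x = nu y
  | FLab a x => wlab u (nu x) = a
  | FFalse => False
  | FNot p => ~ fo_sat u nu p
  | FAnd p q => fo_sat u nu p /\ fo_sat u nu q
  | FEx x p => exists i, wdom u i /\ fo_sat u (fun y => if y == x then i else nu y) p
  end.

Fixpoint fo_free S (z : nat) (phi : fo S) : bool :=
  match phi with
  | FLt x y => (z == x) || (z == y)
  | FEq x y => (z == x) || (z == y)
  | FLab _ x => z == x
  | FFalse => false
  | FNot p => fo_free z p
  | FAnd p q => fo_free z p || fo_free z q
  | FEx x p => (z != x) && fo_free z p
  end.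

Definition fo_sentence S (phi : fo S) : Prop := forall z, ~~ fo_free z phi.

Definition fo_definable S (L : rword S -> Prop) : Prop :=
  exists phi : fo S, fo_sentence phi /\
    forall u, is_word u -> (L u <-> fo_sat u (fun _ => 0) phi).

Definition a_ord (M : Type) (a : M) (u : rword M) : Prop :=
  is_word u /\ forall i, wdom u i -> wlab u i = a.

Definition fo_approximant (M : Type) (pi : rword M -> M) (le : M -> M -> bool)
    (L : rword M -> Prop) (rho : rword M -> M) : Prop :=
  [/\ fo_definable L,
      (forall m : M, fo_definable (fun u => L u /\ rho u = m))
    & (forall u, L u -> le (pi u) (rho u))].

(* Main.v *)
From Stdlib Require Import Classical ClassicalEpsilon.
Require Import Defs.
From mathcomp Require Import all_boot zify.
Set Implicit Arguments. Unset Strict Implicit. Unset Printing Implicit Defensive.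

Definition pb (P : Prop) : bool := if excluded_middle_informative P then true else false.
Lemma pbP P : reflect P (pb P).
Proof. by rewrite /pb; case: excluded_middle_informative => h; constructor. Qed.

Lemma restrict_word S (u : rword S) P : is_word u -> is_word (restrict u P).
Proof.
case=> H1 H2 H3 H4; split=> /=.
- by move=> i [/H1].
- by move=> i j k [? _] [? _] [? _]; apply: H2.
- by move=> i j [? _] [? _]; apply: H3.
- move=> Q HQ [i Qi]; have [x [Qx Hx]] := H4 Q (fun i Qi => proj1 (HQ i Qi)) (ex_intro _ i Qi).
  by exists x.
Qed.

Lemma nat_word S (D : nat -> Prop) (l : nat -> S) : is_word (RWord D (fun i j => i < j) l).
Proof.
split=> /=.
- by move=> i _; rewrite ltnn.
- by move=> i j k _ _ _; apply: ltn_trans.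
- by move=> i j _ _; case: (ltngtP i j) => h; auto.
- move=> Q _ ex.
  have ex' : exists n, pb (Q n) by case: ex => i Qi; exists i; apply/pbP.
  exists (ex_minn ex'); case: ex_minnP => m /pbP Qm Hm.
  split=> // j Qj ltj.
  by have := Hm j (introT (pbP _) Qj); rewrite leqNgt ltj.
Qed.

Lemma cw_word S (u : rword S) T (b : T) : is_word u -> is_word (RWord (wdom u) (word u) (fun _ => b)).
Proof. by case=> H1 H2 H3 H4; split. Qed.

Section Pi.
Variables (M : Type) (pi : rword M -> M).
Hypothesis Hom : ordinal_monoid pi.

Lemma pi_ext (u v : rword M) : is_word u -> is_word v ->
  (forall i, wdom u i <-> wdom v i) ->
  (forall i j, wdom u i -> wdom u j -> (word u i j <-> word v i j)) ->
  (forall i, wdom u i -> wlab u i = wlab v i) -> pi u = pi v.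
Proof.
case: Hom => Hiso _ _ wu wv Hd Hw Hl; apply: Hiso => //.
exists id; split=> //.
- by move=> i /Hd.
- by move=> j /Hd dj; exists j.
Qed.

Lemma pi_empty (u : rword M) x0 : is_word u -> (forall i, ~ wdom u i) -> pi u = om_one pi x0.
Proof.
move=> wu he; apply: pi_ext => //; first exact: nat_word.
- by move=> i; split=> // /he.
- by move=> i j /he.
- by move=> i /he.
Qed.

Lemma pi_single (u : rword M) i : is_word u -> wdom u i -> (forall j, wdom u j -> j = i) -> pi u = wlab u i.
Proof. by case: Hom => _ H _; apply: H. Qed.

Lemma pi_split (u : rword M) (Q : nat -> Prop) : is_word u ->
  (forall i j, wdom u i -> wdom u j -> word u i j -> Q i -> Q j) ->
  pi u = om_mul pi (pi (restrict u (fun i => ~ Q i))) (pi (restrict u Q)).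
Proof.
move=> wu HQ; case: (Hom) => _ _ Has.
pose f i := if pb (Q i) then 1 else 0.
have -> := Has u (fun i => i < 2) (fun i j => i < j) f wu (nat_word _ _).
- apply: pi_ext; try exact: nat_word; try done.
  move=> [|[|i]] //= _.
  + apply: pi_ext; try exact: restrict_word.
    * by move=> i; rewrite /f /=; case: pbP => q; split=> -[]//.
    * by [].
    * by [].
  + apply: pi_ext; try exact: restrict_word.
    * by move=> i; rewrite /f /=; case: pbP => q; split=> -[]//.
    * by [].
    * by [].
- by move=> i _; rewrite /f; case: pb.
- move=> i j di dj lij; rewrite /f; case: pbP => qi; case: pbP => qj; auto.
  by case: qj; apply: HQ qi.
Qed.
End Pi.

Ltac ww := solve [repeat first [assumption|apply: restrict_word|exact: nat_word|apply: cw_word]].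

Section Ord.
Variables (S : Type) (u : rword S).
Hypothesis wu : is_word u.
Definition lew i j := word u i j \/ i = j.
Lemma w_irr i : wdom u i -> ~ word u i i. Proof. by case: wu => H _ _ _; apply: H. Qed.
Lemma w_trans i j k : wdom u i -> wdom u j -> wdom u k -> word u i j -> word u j k -> word u i k.
Proof. by case: wu => _ H _ _; apply: H. Qed.
Lemma w_tot i j : wdom u i -> wdom u j -> i = j \/ word u i j \/ word u j i.
Proof. by case: wu => _ _ H _; apply: H. Qed.
Lemma w_wf (P : nat -> Prop) : (forall i, P i -> wdom u i) -> (exists i, P i) ->
  exists i, P i /\ forall j, P j -> ~ word u j i.
Proof. by case: wu => _ _ _ H; apply: H. Qed.
Lemma w_asym i j : wdom u i -> wdom u j -> word u i j -> ~ word u j i.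
Proof. by move=> di dj ij ji; apply: (w_irr di); apply: w_trans ij ji. Qed.
Lemma w_lt_le i j : wdom u i -> wdom u j -> ~ word u i j -> lew j i.
Proof. by move=> di dj nij; case: (w_tot di dj) => [->|[//|]]; [right|left]. Qed.
Lemma w_le_lt_trans i j k : wdom u i -> wdom u j -> wdom u k -> lew i j -> word u j k -> word u i k.
Proof. by move=> di dj dk [ij|->] jk //; apply: w_trans ij jk. Qed.
Lemma w_lt_le_trans i j k : wdom u i -> wdom u j -> wdom u k -> word u i j -> lew j k -> word u i k.
Proof. by move=> di dj dk ij [jk|<-] //; apply: w_trans ij jk. Qed.
Lemma w_le_trans i j k : wdom u i -> wdom u j -> wdom u k -> lew i j -> lew j k -> lew i k.
Proof. by move=> di dj dk [ij|->] // jk; left; apply: w_lt_le_trans ij jk. Qed.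

Lemma w_ind (P : nat -> Prop) :
  (forall i, wdom u i -> (forall j, wdom u j -> word u j i -> P j) -> P i) ->
  forall i, wdom u i -> P i.
Proof.
move=> H i di; apply: NNPP => nPi.
have [x [[dx nPx] Hx]] := w_wf (P := fun i => wdom u i /\ ~ P i) (fun i h => proj1 h)
   (ex_intro _ i (conj di nPi)).
apply: nPx; apply: H => // j dj ji; apply: NNPP => nPj.
exact: (Hx j (conj dj nPj) ji).
Qed.
End Ord.

Definition fib S (u : rword S) (y : nat -> nat) (n : nat) (i : nat) : Prop :=
  lew u i (y n) /\ (if n is n'.+1 then word u (y n') i else True).

Section Omega.
Variables (M : Type) (pi : rword M -> M).
Hypothesis Hom : ordinal_monoid pi.

Lemma pi_omega (u : rword M) (y : nat -> nat) : is_word u ->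
  (forall n, wdom u (y n)) -> (forall n, word u (y n) (y n.+1)) ->
  (forall i, wdom u i -> exists n, lew u i (y n)) ->
  pi u = pi (RWord (fun _ => True) (fun i j => i < j) (fun n => pi (restrict u (fib u y n)))).
Proof.
move=> wu dy yS cof.
have ymono m n : m < n -> word u (y m) (y n).
  elim: n => // n IH; rewrite ltnS leq_eqVlt => /orP[/eqP->|/IH h]; first exact: yS.
  by apply: w_trans (yS n).
have yle m n : m <= n -> lew u (y m) (y n).
  by rewrite leq_eqVlt => /orP[/eqP->|/ymono]; [right|left].
pose f i := if pb (wdom u i) then
   (if excluded_middle_informative (exists n, pb (lew u i (y n))) is left h then ex_minn h else 0) else 0.
have fP i : wdom u i -> lew u i (y (f i)) /\ forall m, lew u i (y m) -> f i <= m.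
  move=> di; rewrite /f; case: pbP => // _.
  case: excluded_middle_informative => [h|[]].
    case: ex_minnP => m /pbP Hm Hmin; split=> // k hk; apply: Hmin; exact/pbP.
  by have [n hn] := cof i di; exists n; apply/pbP.
case: (Hom) => _ _ Has.
rewrite (Has u (fun _ => True) (fun i j => i < j) f wu (nat_word _ _)) //; last first.
  move=> i j di dj ij; case: (fP i di) => _ mi; case: (fP j dj) => hj _.
  have : f i <= f j by apply: mi; left; apply: w_lt_le_trans hj.
  by rewrite leq_eqVlt => /orP[/eqP->|->]; auto.
apply: (pi_ext Hom) => //; try exact: nat_word.
move=> n _ /=; apply: (pi_ext Hom); try exact: restrict_word.
- move=> i /=; split=> -[di h]; split=> //.
  + case: (fP i di); rewrite h => h1 h2; split=> //.
    case: n h h1 h2 => // n h h1 h2.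
    have : ~ lew u i (y n) by move=> /h2; rewrite ltnn.
    move=> nle; case: (w_tot wu di (dy n)) => [e|[ij|//]]; case: nle; [right|left] => //.
  + case: h => h1 h2; case: (fP i di) => h3 h4.
    apply/eqP; rewrite eqn_leq h4 //=; case: n h1 h2 => // n h1 h2.
    rewrite ltnNge; apply/negP => le1.
    have := yle _ _ le1; move=> h5.
    have := w_le_trans wu di (dy _) (dy _) h3 h5 => -[h6|h6].
      by apply: (w_asym wu (dy n) di h2).
    by subst; apply: (w_irr wu di).
- by [].
- by [].
Qed.
End Omega.

Section Alg.
Variables (M : Type) (pi : rword M -> M).
Hypothesis Hom : ordinal_monoid pi.

Lemma pi_shift (D : nat -> Prop) (l : nat -> M) k : (forall i, D i -> k <= i) ->
  pi (RWord D (fun i j => i < j) l) = pi (RWord (fun i => D (i + k)) (fun i j => i < j) (fun i => l (i + k))).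
Proof.
move=> Hk; case: Hom => Hiso _ _; apply: Hiso; try exact: nat_word.
exists (fun i => i - k); split=> /=.
- by move=> i Di; rewrite subnK //; apply: Hk.
- by move=> j Dj; exists (j + k) => //; rewrite addnK.
- by move=> i j /Hk ? /Hk ?; split; lia.
- by move=> i /Hk ?; rewrite subnK.
Qed.

Lemma mul1 x x0 : om_mul pi (om_one pi x0) x = x.
Proof.
have w : is_word (RWord (fun i => i < 1) (fun i j => i < j) (fun _ => x)) by exact: nat_word.
have e := pi_split Hom (Q := fun _ => True) w; rewrite (@pi_single _ _ Hom _ 0 w) //= in e; last by case.
have e1 : pi (restrict (RWord (fun i => i < 1) (fun i j => i < j) (fun _ => x)) (fun _ => ~ True)) = om_one pi x0.
  by apply: (pi_empty Hom); [exact: restrict_word|move=> i /= []].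
have e2 : pi (restrict (RWord (fun i => i < 1) (fun i j => i < j) (fun _ => x)) (fun _ => True)) = x.
  apply: (@pi_single _ _ Hom _ 0); [exact: restrict_word| by []|by move=> [|j] []].
by rewrite e1 e2 in e; rewrite -e.
Qed.

Lemma mul1r x x0 : om_mul pi x (om_one pi x0) = x.
Proof.
have w : is_word (RWord (fun i => i < 1) (fun i j => i < j) (fun _ => x)) by exact: nat_word.
have e := pi_split Hom (Q := fun _ => False) w; rewrite (@pi_single _ _ Hom _ 0 w) //= in e; last by case.
have e1 : pi (restrict (RWord (fun i => i < 1) (fun i j => i < j) (fun _ => x)) (fun _ => False)) = om_one pi x0.
  by apply: (pi_empty Hom); [exact: restrict_word|move=> i /= []].
have e2 : pi (restrict (RWord (fun i => i < 1) (fun i j => i < j) (fun _ => x)) (fun _ => ~ False)) = x.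
  apply: (@pi_single _ _ Hom _ 0); [exact: restrict_word| by split|by move=> [|j] []].
by rewrite e1 e2 in e; rewrite -e.
Qed.

Lemma pi_two (u : rword M) i j : is_word u -> wdom u i -> wdom u j -> word u i j ->
  (forall k, wdom u k -> k = i \/ k = j) -> pi u = om_mul pi (wlab u i) (wlab u j).
Proof.
move=> wu di dj ij H.
rewrite (pi_split Hom (Q := fun k => k = j)) //; last first.
  move=> a b da db ab e; subst a; case: (H b db) => // e; subst b.
  by case: (w_asym wu da db ab).
congr om_mul.
  apply: (@pi_single _ _ Hom _ i); [exact: restrict_word|split=> // e|].
    by subst; apply: (w_irr wu di).
  by move=> k [dk nk]; case: (H k dk).
by apply: (@pi_single _ _ Hom _ j); [exact: restrict_word|split|move=> k []].
Qed.

Definition altw (x y : M) := RWord (fun _ => True) (fun i j => i < j) (fun i => if odd i then y else x).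

Lemma pi_alt x y : pi (altw x y) = om_omega pi (om_mul pi x y).
Proof.
have w : is_word (altw x y) by exact: nat_word.
have h1 : forall n, word (altw x y) (2 * n).+1 (2 * n.+1).+1 by move=> n; rewrite /=; lia.
have h2 : forall i, wdom (altw x y) i -> exists n, lew (altw x y) i (2 * n).+1.
  by move=> i _; exists i; left; rewrite /=; lia.
rewrite (pi_omega Hom (y := fun n => (2 * n).+1) w) //=.
apply: (pi_ext Hom); try exact: nat_word; try done.
move=> n _ /=; rewrite (@pi_two _ (2 * n) (2 * n).+1) /=; first by rewrite oddM.
- exact: restrict_word.
- by rewrite /fib /=; split=> //; split; [left=> /=; lia|case: n => //= n; lia].
- by rewrite /fib /=; split=> //; split; [right|case: n => //= n; lia].
- by rewrite /=; lia.
- move=> k [_ [g1 g2]]; rewrite /lew /altw /= in g1.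
  case: n g1 g2 => [|n] g1 g2 /=; rewrite /altw /= in g2; lia.
Qed.
End Alg.

Section Alg2.
Variables (M : Type) (pi : rword M -> M).
Hypothesis Hom : ordinal_monoid pi.

Lemma pi_tail (l : nat -> M) :
  pi (restrict (RWord (fun _ => True) (fun i j => i < j) l) (fun i => 0 < i)) =
  pi (RWord (fun _ => True) (fun i j => i < j) (fun i => l i.+1)).
Proof.
have -> : pi (restrict (RWord (fun _ => True) (fun i j => i < j) l) (fun i => 0 < i)) =
  pi (RWord (fun i => 0 < i) (fun i j => i < j) l).
  apply: (pi_ext Hom); [ww|exact: nat_word|by move=> i /=; split=> [[]|] //|by []|by []].
rewrite (@pi_shift _ _ Hom _ _ 1) //.
apply: (pi_ext Hom); try exact: nat_word; try done.
- by move=> i /=; rewrite addn1.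
- by move=> i _ /=; rewrite addn1.
Qed.

Lemma F1 y : om_mul pi y (om_omega pi y) = om_omega pi y.
Proof.
rewrite /om_omega {2}(pi_split Hom (Q := fun i => 0 < i)); [|exact: nat_word|by move=> /= i j _ _ ij hi; apply: ltn_trans hi ij].
rewrite pi_tail; congr om_mul; symmetry.
apply: (@pi_single _ _ Hom _ 0); [ww|by []|by move=> [|j] [] //].
Qed.

Lemma F2 x y : om_mul pi x y = y -> om_mul pi x (om_omega pi y) = om_omega pi y.
Proof.
move=> xy.
pose V := RWord (fun _ => True) (fun i j => i < j) (fun i => if i == 0 then x else y).
have wV : is_word V by exact: nat_word.
have e1 : pi V = om_mul pi x (om_omega pi y).
  rewrite (pi_split Hom (Q := fun i => 0 < i)) //; last by move=> /= i j _ _ ij hi; apply: ltn_trans hi ij.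
  rewrite pi_tail; congr om_mul.
  apply: (@pi_single _ _ Hom _ 0); [ww|by []|by move=> [|j] [] //].
have h1 : forall n, word V n.+1 n.+2 by move=> n /=.
have h2 : forall i, wdom V i -> exists n, lew V i n.+1 by move=> i _; exists i; left=> /=.
rewrite -e1 (pi_omega Hom (y := fun n => n.+1) wV) //.
apply: (pi_ext Hom); try exact: nat_word; try done.
move=> [|n] _ /=.
- rewrite (@pi_two _ _ Hom _ 0 1) /=.
  + by [].
  + ww.
  + by split=> //; split=> //; left.
  + by split=> //; split=> //; right.
  + by [].
  + by move=> [|[|k]] [_ [h _]] //; auto; rewrite /lew /= in h; lia.
- apply: (@pi_single _ _ Hom _ n.+2); first ww.
    by split=> //; split; [right|].
  move=> k [_ [g1 g2]]; rewrite /lew /= in g1 g2; lia.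
Qed.

Lemma F3 x y : om_omega pi (om_mul pi x y) = om_mul pi x (om_omega pi (om_mul pi y x)).
Proof.
rewrite -!(pi_alt Hom).
rewrite (pi_split Hom (Q := fun i => 0 < i)); [|exact: nat_word|by move=> /= i j _ _ ij hi; apply: ltn_trans hi ij].
rewrite /altw pi_tail; congr om_mul.
  apply: (@pi_single _ _ Hom _ 0); [ww|by []|by move=> [|j] [] //].
apply: (pi_ext Hom); try exact: nat_word; try done.
by move=> i _ /=; case: (odd i).
Qed.

Definition xs (a : M) k := iter k (om_omega pi) a.

Lemma absorb a j l : j < l -> om_mul pi (xs a j) (xs a l) = xs a l.
Proof.
elim: l => // l IH; rewrite ltnS leq_eqVlt => /orP[/eqP->|/IH h].
  exact: F1.
exact: F2.
Qed.
End Alg2.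

Lemma stab (M : finType) (pi : rword M -> M) : ordinal_monoid pi ->
  forall a, om_omega pi (xs pi a #|M|) = xs pi a #|M|.
Proof.
move=> Hom a.
have [i [j [ij [eij jM]]]] : exists i j, i < j /\ xs pi a i = xs pi a j /\ j <= #|M|.
  apply: NNPP => H.
  have inj : injective (fun k : 'I_#|M|.+1 => xs pi a k).
    move=> k l e; apply: val_inj; case: (ltngtP k l) => // h; exfalso.
    - by apply: H; exists k, l; split=> //; split=> //; rewrite -ltnS.
    - by apply: H; exists l, k; split=> //; split=> //; rewrite -ltnS.
  by have := leq_card _ inj; rewrite card_ord ltnn.
have periodic t : xs pi a (i + t) = xs pi a (j + t).
  by elim: t => [|t IH]; rewrite ?addn0 // !addnS /= IH.
have st : xs pi a i.+2 = xs pi a i.+1.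
  case: (ltngtP i.+1 j) => h.
  - have e0 : om_mul pi (xs pi a i.+1) (xs pi a i) = xs pi a i.
      by rewrite eij; apply: absorb.
    have := F3 Hom (xs pi a i.+1) (xs pi a i).
    rewrite e0 (absorb Hom a (ltnSn i)) (F1 Hom) => e.
    by change (om_omega pi (xs pi a i.+1) = om_omega pi (xs pi a i)); rewrite e.
  - by rewrite ltnNge ij in h.
  - have e : xs pi a i.+1 = xs pi a i by rewrite h -eij.
    by change (om_omega pi (xs pi a i.+1) = om_omega pi (xs pi a i)); rewrite e.
have all_eq t : xs pi a (i.+1 + t) = xs pi a i.+1.
  elim: t => [|t IH]; first by rewrite addn0.
  rewrite addnS; change (om_omega pi (xs pi a (i.+1 + t)) = xs pi a i.+1); rewrite IH.
  exact: st.
have h1 := all_eq (#|M| - i.+1); have h2 := all_eq (#|M| - i.+1).+1.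
rewrite subnKC in h1; last by apply: leq_trans jM.
rewrite addnS subnKC in h2; last by apply: leq_trans jM.
change (om_omega pi (xs pi a #|M|) = xs pi a i.+1) in h2; by rewrite h2 h1.
Qed.

Definition chs (P : nat -> Prop) : nat :=
  match excluded_middle_informative (exists n, P n) with
  | left h => proj1_sig (constructive_indefinite_description _ h)
  | right _ => 0 end.
Lemma chsP P : (exists n, P n) -> P (chs P).
Proof.
rewrite /chs; case: excluded_middle_informative => // h _.
exact: proj2_sig (constructive_indefinite_description _ h).
Qed.

Section Cof.
Variables (S : Type) (w : rword S).
Hypothesis ww : is_word w.
Hypothesis nomax : forall i, wdom w i -> exists j, wdom w j /\ word w i j.

Lemma finmax n c : wdom w c -> exists m, [/\ wdom w m, lew w c m & forall i, i <= n -> wdom w i -> lew w i m].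
Proof.
move=> dc; elim: n => [|n [m [dm cm Hm]]].
  case: (classic (wdom w 0)) => d0.
    case: (w_tot ww dc d0) => [e|[h|h]].
    - by exists c; split; [|right|move=> [|i] // _ _; right].
    - by exists 0; split=> //; [left|move=> [|i] // _ _; right].
    - by exists c; split=> //; [right|move=> [|i] // _ _; left].
  by exists c; split=> //; [right|move=> [|i] //].
case: (classic (wdom w n.+1)) => dn.
  case: (w_tot ww dm dn) => [e|[h|h]].
  - exists m; split=> // i; rewrite leq_eqVlt => /orP[/eqP->|]; first by right.
    by rewrite ltnS; apply: Hm.
  - exists n.+1; split=> //; first by apply: w_le_trans cm _ => //; left.
    move=> i; rewrite leq_eqVlt => /orP[/eqP->|]; first by right.
    by rewrite ltnS => /Hm h1 di; apply: w_le_trans (h1 di) _ => //; left.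
  - exists m; split=> // i; rewrite leq_eqVlt => /orP[/eqP->|]; first by left.
    by rewrite ltnS; apply: Hm.
exists m; split=> // i; rewrite leq_eqVlt => /orP[/eqP->|] //.
by rewrite ltnS; apply: Hm.
Qed.

Definition nxt n c := chs (fun d => [/\ wdom w d, word w c d & forall i, i <= n -> wdom w i -> word w i d]).

Lemma nxtP n c : wdom w c -> [/\ wdom w (nxt n c), word w c (nxt n c) &
   forall i, i <= n -> wdom w i -> word w i (nxt n c)].
Proof.
move=> dc; apply: (chsP (P := fun d => [/\ wdom w d, word w c d & forall i, i <= n -> wdom w i -> word w i d])).
have [m [dm cm Hm]] := finmax n dc.
have [d [dd md]] := nomax dm; exists d; split=> //.
  exact: (w_le_lt_trans ww dc dm dd cm md).
by move=> i le di; exact: (w_le_lt_trans ww di dm dd (Hm i le di) md).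
Qed.

Lemma cofinal c0 : wdom w c0 -> exists y : nat -> nat,
  [/\ forall n, wdom w (y n), forall n, word w (y n) (y n.+1) & forall i, wdom w i -> exists n, lew w i (y n)].
Proof.
move=> d0; pose y := fix y n := if n is n'.+1 then nxt n (y n') else nxt 0 c0.
have dy n : wdom w (y n) by elim: n => [|n IH]; case: (nxtP 0 d0) => //; case: (nxtP n.+1 IH).
exists y; split=> //.
  by move=> n; case: (nxtP n.+1 (dy n)).
move=> i di; exists i.+1; left=> /=; case: (nxtP i.+1 (dy i)) => _ _; apply=> //.
Qed.
End Cof.

Lemma pi_de M (pi : rword M -> M) : ordinal_monoid pi -> forall u v : rword M,
  is_word u -> is_word v -> (forall i, wdom u i <-> wdom v i) -> word u = word v -> wlab u = wlab v -> pi u = pi v.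
Proof.
move=> Hom u v wu wv hd hw hl; apply: (pi_ext Hom) => //.
- by move=> i j _ _; rewrite hw.
- by move=> i _; rewrite hl.
Qed.

Definition segP S (u : rword S) (lo : option nat) x i :=
  lew u i x /\ (if lo is Some l then word u l i else True).

Section Stable.
Variables (M : Type) (pi : rword M -> M).
Hypothesis Hom : ordinal_monoid pi.
Variable z : M.
Hypothesis hz : om_omega pi z = z.

Lemma zz : om_mul pi z z = z.
Proof. by have := F1 Hom z; rewrite hz. Qed.

Definition upc (S : Type) (u : rword S) (L : nat -> Prop) :=
  forall i j, wdom u i -> wdom u j -> lew u i j -> L i -> L j.

Lemma segA (u : rword M) : is_word u -> (forall i, wdom u i -> wlab u i = z) ->
  forall x, wdom u x -> forall L, upc u L -> L x -> pi (restrict u (fun i => L i /\ lew u i x)) = z.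
Proof.
move=> wu lab; apply: (w_ind wu) => x dx IH L uL Lx.
have IHs : forall (V : rword M) L' y, is_word V -> word V = word u -> wlab V = wlab u ->
    wdom u y -> word u y x -> upc u L' -> L' y ->
    (forall i, wdom V i <-> wdom u i /\ L' i /\ lew u i y) -> pi V = z.
  move=> V L' y wV hw hl dy yx uL' L'y hd.
  rewrite -(IH y dy yx L' uL' L'y); apply: (pi_de Hom) => //; first by ww.
pose W := restrict u (fun i => L i /\ lew u i x).
have wW : is_word W by ww.
rewrite (@pi_split _ _ Hom W (fun i => i = x) wW); last first.
  move=> i j [di [_ ix]] [dj [_ jx]] ij e; subst i; case: jx => // jx.
  by case: (w_asym wu dx dj ij jx).
have -> : pi (restrict W (fun i => i = x)) = z.
  rewrite (@pi_single _ _ Hom _ x) /=; [exact: lab|ww|by split=> //; split=> //; split=> //; right|by move=> j []].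
pose W' := restrict W (fun i => ~ i = x).
have wW' : is_word W' by ww.
have dW' : forall i, wdom W' i <-> [/\ wdom u i, word u i x & L i].
  move=> i /=; split.
    by move=> [[di [Li [ix|ix]]] nix].
  move=> [di ix hi]; split; last first.
    by move=> e; subst; apply: (w_irr wu dx).
  by split=> //; split=> //; left.
case: (classic (exists i, wdom W' i)) => [[i0 di0]|hem]; last first.
  by rewrite (pi_empty Hom z) ?mul1 //; move=> i di; apply: hem; exists i.
case: (classic (exists y, wdom W' y /\ forall i, wdom W' i -> lew u i y)) => [[y [dy ymax]]|nomax].
  have := proj1 (dW' y) dy => -[duy yx Ly].
  rewrite (IHs W' L y) //; first exact: zz.
  move=> i; rewrite dW'; split.
    by move=> [di ix Li]; split=> //; split=> //; apply: ymax; apply/dW'.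
  move=> [di [Li iy]]; split=> //.
  exact: (w_le_lt_trans wu di duy dx iy yx).
have nm : forall i, wdom W' i -> exists j, wdom W' j /\ word W' i j.
  move=> i di; apply: NNPP => h; apply: nomax; exists i; split=> // j dj.
  have [d1 _ _] := proj1 (dW' i) di; have [d2 _ _] := proj1 (dW' j) dj.
  apply: (w_lt_le wu d1 d2) => ij; apply: h; exists j; split=> //.
have [y [dy yS cof]] := cofinal wW' nm di0.
rewrite (pi_omega Hom wW' dy yS cof).
have -> : pi (RWord (fun=> True) (fun i j : nat => i < j) (fun n : nat => pi (restrict W' (fib W' y n)))) =
          pi (RWord (fun=> True) (fun i j : nat => i < j) (fun n : nat => z)).
  apply: (pi_ext Hom); try exact: nat_word; try done.
  move=> n _ /=.
  have [dyn ynx Lyn] := proj1 (dW' (y n)) (dy n).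
  case: n dyn ynx Lyn => [|n] dyn ynx Lyn.
    apply: (IHs _ L (y 0)) => //; first ww.
    move=> i /=; rewrite /fib /=; split.
      by move=> [[[di [Li _]] _] [iy _]]; split.
    move=> [di [Li iy]]; have ix := w_le_lt_trans wu di dyn dx iy ynx.
    split; [split; [split=> //; split=> //; by left|move=> e; subst; exact: (w_irr wu dx ix)]|by split].
  have [dyn' _ _] := proj1 (dW' (y n)) (dy n).
  apply: (IHs _ (fun i => word u (y n) i) (y n.+1)) => //; first ww.
  - move=> a b da db ab h; exact: (w_lt_le_trans wu dyn' da db h ab).
  - exact: yS.
  move=> i /=; rewrite /fib /=; split.
    by move=> [[[di [Li _]] _] [iy yi]].
  move=> [di [yi iy]].
  have [_ _ Lyn'] := proj1 (dW' (y n)) (dy n).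
  have Li : L i by apply: (uL (y n) i) => //; left.
  have ix := w_le_lt_trans wu di dyn dx iy ynx.
  split; [split; [split=> //; split=> //; by left|move=> e; subst; exact: (w_irr wu dx ix)]|by split].
rewrite -/(om_omega pi z) hz; exact: zz.
Qed.

Lemma stable_word (u : rword M) : is_word u -> (forall i, wdom u i -> wlab u i = z) ->
  (exists i, wdom u i) -> pi u = z.
Proof.
move=> wu lab [i0 di0].
have -> : pi u = pi (restrict u (fun _ => True)).
  by apply: (pi_de Hom) => //; [ww|move=> i /=; split=> [|[]]].
case: (classic (exists y, wdom u y /\ forall i, wdom u i -> lew u i y)) => [[y [dy ymax]]|nomax].
  rewrite -(segA wu lab dy (L := fun _ => True)) //.
  apply: (pi_de Hom) => //; try ww.
  by move=> i /=; split=> [[di _]|[di [_ iy]]]; split=> //; split=> //; apply: ymax.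
have nm : forall i, wdom (restrict u (fun _ => True)) i -> exists j, wdom (restrict u (fun _ => True)) j /\ word u i j.
  move=> i [di _]; apply: NNPP => h; apply: nomax; exists i; split=> // j dj.
  apply: (w_lt_le wu di dj) => ij; apply: h; exists j; split=> //.
have wr : is_word (restrict u (fun _ => True)) by ww.
have [y [dy yS cof]] := cofinal wr nm (conj di0 I).
rewrite (pi_omega Hom wr dy yS cof).
have -> : pi (RWord (fun=> True) (fun i j : nat => i < j) (fun n : nat => pi (restrict (restrict u (fun _ => True)) (fib (restrict u (fun _ => True)) y n)))) =
          pi (RWord (fun=> True) (fun i j : nat => i < j) (fun n : nat => z)).
  apply: (pi_ext Hom); try exact: nat_word; try done.
  move=> n _ /=.
  have [dyn _] := dy n.
  case: n dyn => [|n] dyn.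
    rewrite -(segA wu lab dyn (L := fun _ => True)) //.
    apply: (pi_de Hom) => //; try ww.
    by move=> i /=; rewrite /fib /=; split=> [[[di _] [iy _]]|[di [_ iy]]]; split=> //; split.
  have [dyn' _] := dy n.
  rewrite -(segA wu lab dyn (L := fun i => word u (y n) i)) //.
  - apply: (pi_de Hom) => //; try ww.
    by move=> i /=; rewrite /fib /=; split=> [[[di _] [iy yi]]|[di [yi iy]]]; split=> //; split.
  - move=> a b da db ab h; exact: (w_lt_le_trans wu dyn' da db h ab).
  - exact: yS.
rewrite -/(om_omega pi z); exact: hz.
Qed.
End Stable.

Section Blocks.
Variables (S : Type) (u : rword S).
Hypothesis wu : is_word u.

Definition L1 x := wdom u x /\ forall y, wdom u y -> word u y x -> exists z, [/\ wdom u z, word u y z & word u z x].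

Definition isfl x p := [/\ L1 p, lew u p x & forall q, L1 q -> lew u q x -> lew u q p].
Definition fl x := chs (isfl x).

Lemma L1d x : L1 x -> wdom u x. Proof. by case. Qed.

Lemma fl_ex x : wdom u x -> exists p, isfl x p.
Proof.
move=> dx.
pose T q := [/\ wdom u q, lew u q x & forall r, L1 r -> lew u r x -> lew u r q].
have [p [[dp px Hp] pmin]] := w_wf wu (P := T) (fun i h => let: And3 d _ _ := h in d)
   (ex_intro _ x (And3 dx (or_intror erefl) (fun r _ h => h))).
exists p; split=> //; split=> // y dy yp.
apply: NNPP => nz.
have yx : lew u y x by left; exact: (w_lt_le_trans wu dy dp dx yp px).
have nTy : ~ T y by move=> Ty; exact: (pmin y Ty yp).
have [r [Lr rx nry]] : exists r, [/\ L1 r, lew u r x & ~ lew u r y].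
  apply: NNPP => h; apply: nTy; split=> // r Lr rx; apply: NNPP => nr; apply: h; by exists r; split.
have dr := L1d Lr.
have yr : word u y r by case: (w_tot wu dy dr) => [e|[//|ry]]; case: nry; [right; by rewrite e|by left].
have rp := Hp r Lr rx.
case: rp => [rp|e].
  by apply: nz; exists r.
by subst r; case: Lr => _ /(_ y dy yp) [z [dz yz zp]]; apply: nz; exists z.
Qed.

Lemma flP x : wdom u x -> isfl x (fl x).
Proof. by move=> dx; apply: chsP; apply: fl_ex. Qed.

Lemma w_antisym i j : wdom u i -> wdom u j -> lew u i j -> lew u j i -> i = j.
Proof.
move=> di dj [ij|//] [ji|//]; first by case: (w_asym wu di dj ij ji).
Qed.

Lemma fl_L1 p : L1 p -> fl p = p.
Proof.
move=> Lp; have dp := L1d Lp; have [Lf fp Hf] := flP dp.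
apply: w_antisym => //; first exact: L1d.
exact: Hf Lp (or_intror erefl).
Qed.

Lemma fl_mono x y : wdom u x -> wdom u y -> lew u x y -> lew u (fl x) (fl y).
Proof.
move=> dx dy xy; have [Lf fx _] := flP dx; have [_ _ H] := flP dy.
apply: H => //; exact: (w_le_trans wu (L1d Lf) dx dy fx xy).
Qed.

Lemma fl_le x : wdom u x -> lew u (fl x) x.
Proof. by move=> dx; case: (flP dx). Qed.

Lemma fl_above p x : wdom u x -> L1 p -> lew u p x -> lew u p (fl x).
Proof. by move=> dx Lp px; case: (flP dx) => _ _; apply. Qed.

Definition issc x s := [/\ wdom u s, word u x s & forall t, wdom u t -> word u x t -> lew u s t].
Definition sc x := chs (issc x).

Lemma sc_ex x t : wdom u t -> word u x t -> issc x (sc x).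
Proof.
move=> dt xt; apply: chsP.
have [s [[ds xs] smin]] := w_wf wu (P := fun s => wdom u s /\ word u x s) (fun i h => proj1 h)
   (ex_intro _ t (conj dt xt)).
exists s; split=> // t' dt' xt'; apply: (w_lt_le wu dt' ds) => ts.
exact: (smin t' (conj dt' xt') ts).
Qed.

Definition blk p x := fl x = p.

Lemma blockmax p x : wdom u x -> blk p x -> (forall y, wdom u y -> blk p y -> lew u y x) ->
  forall y, wdom u y -> lew u y x.
Proof.
move=> dx bx xmax y dy; apply: NNPP => nyx.
have xy : word u x y by case: (w_tot wu dx dy) => [e|[//|yx]]; case: nyx; [right|left].
have [ds xs smin] := sc_ex dy xy.
set s := sc x in ds xs smin.
have bs : ~ blk p s.
  move=> bs; case: (xmax s ds bs) => [sx|e].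
    exact: (w_asym wu dx ds xs sx).
  by rewrite e in xs; exact: (w_irr wu dx xs).
have [Lq qs _] := flP ds.
have dq := L1d Lq.
have pq : lew u p (fl s) by rewrite -bx; apply: fl_mono => //; left.
case: qs => [qs|qs].
  have qx : lew u (fl s) x.
    apply: (w_lt_le wu dx dq) => xq.
    case: (smin _ dq xq) => [sq|e].
      exact: (w_asym wu dq ds qs sq).
    by move: qs; rewrite -e => qs; exact: (w_irr wu ds qs).
  have := fl_above dx Lq qx; rewrite bx => qp.
  have dp : wdom u p by rewrite -bx; apply: L1d; case: (flP dx).
  by apply: bs; apply/esym; apply: w_antisym.
rewrite qs in Lq; case: Lq => _ /(_ x dx xs) [z [dz xz zs]].
case: (smin z dz xz) => [sz|e].
  exact: (w_asym wu dz ds zs sz).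
by rewrite e in zs; exact: (w_irr wu dz zs).
Qed.

Definition ych p n := iter n sc p.

Lemma blk_step p x t : wdom u x -> blk p x -> wdom u t -> blk p t -> word u x t ->
  blk p (sc x) /\ issc x (sc x).
Proof.
move=> dx bx dt bt xt; have [ds xs smin] := sc_ex dt xt; split; last by split.
have h1 := fl_mono dx ds (or_introl xs); have h2 := fl_mono ds dt (smin t dt xt).
rewrite /blk in bx bt *; rewrite bx in h1; rewrite bt in h2.
have dp : wdom u p by rewrite -bx; apply: L1d; case: (flP dx).
have df : wdom u (fl (sc x)) by apply: L1d; case: (flP ds).
by apply: w_antisym.
Qed.

Lemma blk_cof p : L1 p -> forall x, wdom u x -> blk p x ->
  exists n, x = ych p n /\ forall k, k < n -> blk p (ych p k) /\ issc (ych p k) (ych p k.+1).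
Proof.
move=> Lp; have dp := L1d Lp.
apply: (w_ind wu) => x dx IH bx.
case: (classic (x = p)) => [->|nxp]; first by exists 0.
have nL : ~ L1 x by move=> Lx; apply: nxp; rewrite -bx /blk fl_L1.
have [y' [dy' y'x nz]] : exists y', [/\ wdom u y', word u y' x & ~ exists z, [/\ wdom u z, word u y' z & word u z x]].
  apply: NNPP => h; apply: nL; split=> // y dy yx; apply: NNPP => nz; apply: h; by exists y.
have px : word u p x.
  have := fl_le dx; rewrite bx => -[//|e]; by case: nxp.
have py : lew u p y'.
  apply: (w_lt_le wu dy' dp) => y'p; apply: nz; by exists p.
have by' : blk p y'.
  have h1 := fl_above dy' Lp py; have h2 := fl_mono dy' dx (or_introl y'x).
  rewrite bx in h2; apply: w_antisym => //; first by apply: L1d; case: (flP dy').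
have [n [e ch]] := IH y' dy' y'x by'.
have [ds ys smin] := sc_ex dx y'x.
have sx : sc y' = x.
  case: (smin x dx y'x) => [sx|//]; case: nz; by exists (sc y').
exists n.+1; split; first by rewrite /ych iterS -/(ych p n) -e sx.
move=> k; rewrite ltnS leq_eqVlt => /orP[/eqP->|/ch //].
rewrite -e /ych iterS -/(ych p n) -e; split=> //.
Qed.
End Blocks.

Definition cw S T (u : rword S) (b : T) := RWord (wdom u) (word u) (fun _ => b).

Fixpoint Pch S (u : rword S) j v : Prop :=
  if j is j'.+1 then exists i, [/\ wdom u i, word u v i & Pch u j' i] else True.

Section PiBlocks.
Variables (M : Type) (pi : rword M -> M).
Hypothesis Hom : ordinal_monoid pi.

Lemma pi_chain b : forall c (V : rword M) (y : nat -> nat), is_word V ->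
  (forall i, wdom V i -> wlab V i = b) ->
  (forall i, wdom V i <-> exists2 k, k <= c & i = y k) ->
  (forall k l, k < l -> l <= c -> word V (y k) (y l)) ->
  pi V = om_pow pi b c.+1.
Proof.
elim=> [|c IH] V y wV lab hd hinc.
  rewrite (@pi_single _ _ Hom _ (y 0)) //.
  - by rewrite lab ?hd //=; [rewrite mul1r | exists 0].
  - by apply/hd; exists 0.
  - by move=> j /hd [[|k] //] ->.
have dy0 : wdom V (y 0) by apply/hd; exists 0.
rewrite (pi_split Hom (Q := fun i => word V (y 0) i)) //; last first.
  move=> i j di dj ij h; exact: (w_trans wV dy0 di dj h ij).
have -> : pi (restrict V (fun i => ~ word V (y 0) i)) = b.
  rewrite (@pi_single _ _ Hom _ (y 0)) //=; [by rewrite lab|ww|split=> //; exact: w_irr|].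
  move=> j [/hd [[|k] // kc ->] h]; case: h; exact: hinc.
rewrite (IH _ (fun k => y k.+1)) //; first ww.
- by move=> i [di _]; apply: lab.
- move=> i /=; split.
    move=> [/hd [[|k] kc ->] h]; first by case: (w_irr wV dy0 h).
    by exists k.
  move=> [k kc ->]; split; first by apply/hd; exists k.+1.
  exact: hinc.
- by move=> k l kl lc; apply: hinc.
Qed.

Section U.
Variable (u : rword M).
Hypothesis wu : is_word u.


Lemma omega_block b p : L1 u p -> (forall x, wdom u x -> blk u p x -> exists t, [/\ wdom u t, blk u p t & word u x t]) ->
  pi (restrict (cw u b) (blk u p)) = om_omega pi b.
Proof.
move=> Lp nm; have dp := L1d Lp.
pose W := restrict (cw u b) (blk u p).
have wW : is_word W by apply: restrict_word; apply: cw_word.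
have bp : blk u p p by rewrite /blk fl_L1.
have hy : forall n, wdom u (ych u p n) /\ blk u p (ych u p n).
  elim=> [|n [dn bn]] //; have [t [dt bt nt]] := nm _ dn bn.
  have [b1 [ds _ _]] := blk_step wu dn bn dt bt nt.
  by rewrite /ych iterS -/(ych u p n).
have hs : forall n, issc u (ych u p n) (ych u p n.+1).
  move=> n; have [dn bn] := hy n; have [t [dt bt nt]] := nm _ dn bn.
  have [_ h] := blk_step wu dn bn dt bt nt.
  by rewrite /ych iterS -/(ych u p n).
rewrite (pi_omega Hom (y := ych u p) wW).
- apply: (pi_ext Hom); try exact: nat_word; try done.
  move=> n _ /=; rewrite (@pi_single _ _ Hom _ (ych u p n)) //; first ww.
    split; first exact: hy.
    split; first by right.
    by case: n => // n; case: (hs n).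
  move=> j [[dj bj] [jy h]]; case: n h jy => [_|n h] jy.
    apply: (w_antisym wu dj dp jy); rewrite -bj; exact: fl_le.
  have [ds ys smin] := hs n.
  apply: (w_antisym wu dj ds jy); exact: smin.
- by move=> n; split; case: (hy n).
- by move=> n; case: (hs n).
- move=> i [di bi]; have [n [e _]] := blk_cof wu Lp di bi.
  by exists n; right.
Qed.

Lemma finite_block b m : wdom u m -> (forall y, wdom u y -> lew u y m) ->
  exists c, pi (restrict (cw u b) (blk u (fl u m))) = om_pow pi b c.+1 /\
     forall j, Pch u j (fl u m) <-> j <= c.
Proof.
move=> dm mmax; set p := fl u m.
have [Lp _ _] := flP wu dm; have dp := L1d Lp.
have [c [e ch]] := blk_cof wu Lp dm (erefl _).
pose y := ych u p.
have hd : forall k, k <= c -> wdom u (y k).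
  case=> [|k] kc; first exact: dp.
  by case: (ch k kc) => _ [].
have inc : forall k l, k < l -> l <= c -> word u (y k) (y l).
  move=> k l kl; elim: l kl => // l IHl; rewrite ltnS leq_eqVlt => /orP[/eqP<-|kl] lc.
    by case: (ch k lc) => _ [].
  have [_ [ds h _]] := ch l lc.
  apply: (w_trans wu (hd k _) (hd l _) ds (IHl kl _) h); lia.
have blkP : forall x, wdom u x -> blk u p x -> exists2 k, k <= c & x = y k.
  move=> x dx bx; have [n [-> chn]] := blk_cof wu Lp dx bx.
  exists n => //; rewrite leqNgt; apply/negP => cn.
  have [_ [ds ms _]] := chn c cn.
  rewrite -/(y c) -/(y c.+1) /y -e in ds ms.
  case: (mmax _ ds) => [h|h].
    exact: (w_asym wu dm ds ms h).
  by rewrite h in ms; exact: (w_irr wu dm ms).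
have blkY : forall k, k <= c -> blk u p (y k).
  move=> k; rewrite leq_eqVlt => /orP[/eqP->|kc]; first by rewrite /y -e.
  by case: (ch k kc).
have leY : forall k l, k <= l -> l <= c -> lew u (y k) (y l).
  move=> k l; rewrite leq_eqVlt => /orP[/eqP->|kl] lc; [by right|by left; apply: inc].
exists c; split.
  apply: (pi_chain (y := y)); first by apply: restrict_word; apply: cw_word.
  - by [].
  - move=> i /=; split; first by move=> [di bi]; apply: blkP.
    by move=> [k kc ->]; split; [apply: hd|apply: blkY].
  - by move=> k l kl lc; apply: inc.
suff H : forall j k, k <= c -> (Pch u j (y k) <-> j + k <= c).
  by move=> j; have := H j 0 (leq0n c); rewrite addn0.
elim=> [|j IH] k kc /=; first by split.
split.
  move=> [i [di yi Pi]].
  have pi_ : lew u p i.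
    left; apply: (w_le_lt_trans wu dp (hd k kc) di _ yi).
    by have := leY 0 k (leq0n _) kc.
  have bi : blk u p i.
    have h1 := fl_above wu di Lp pi_; have h2 := fl_mono wu di dm (mmax i di).
    apply: (w_antisym wu) => //; by apply: L1d; case: (flP wu di).
  have [l lc el] := blkP i di bi; subst i.
  have kl : k < l.
    rewrite ltnNge; apply/negP => lk.
    case: (leY l k lk kc) => [h|h].
      exact: (w_asym wu (hd k kc) (hd l lc) yi h).
    by rewrite h in yi; exact: (w_irr wu (hd k kc) yi).
  have := proj1 (IH l lc) Pi; lia.
move=> jk; exists (y k.+1); split.
- by apply: hd; lia.
- by apply: inc; lia.
- by apply/IH; lia.
Qed.
End U.
End PiBlocks.

Lemma sub_word S T (u : rword S) (E : nat -> Prop) (l : nat -> T) : is_word u -> (forall i, E i -> wdom u i) ->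
  is_word (RWord E (word u) l).
Proof.
case=> H1 H2 H3 H4 hE; split=> /=.
- by move=> i /hE /H1.
- by move=> i j k /hE ? /hE ? /hE ?; apply: H2.
- by move=> i j /hE ? /hE ?; apply: H3.
- move=> P HP ex; apply: H4 => // i /HP; exact: hE.
Qed.

Definition hasmax S (u : rword S) := exists m, wdom u m /\ forall y, wdom u y -> ~ word u m y.
Definition maxL1 S (u : rword S) x := L1 u x /\ forall y, L1 u y -> ~ word u x y.
Definition Dp S (u : rword S) x := L1 u x /\ ~ (hasmax u /\ maxL1 u x).

Section Dec.
Variables (M : Type) (pi : rword M -> M).
Hypothesis Hom : ordinal_monoid pi.
Variable u : rword M.
Hypothesis wu : is_word u.

Lemma dec0 b : pi (cw u b) = pi (RWord (L1 u) (word u) (fun p => pi (restrict (cw u b) (blk u p)))).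
Proof.
case: (Hom) => _ _ Has; apply: Has.
- exact: cw_word.
- by apply: sub_word wu _; apply: L1d.
- by move=> i di; case: (flP wu di).
- move=> i j di dj ij; case: (fl_mono wu di dj (or_introl ij)); auto.
Qed.

Lemma nomax_block p : L1 u p -> (forall x, wdom u x -> blk u p x -> (forall y, wdom u y -> lew u y x) -> False) ->
  forall x, wdom u x -> blk u p x -> exists t, [/\ wdom u t, blk u p t & word u x t].
Proof.
move=> Lp H x dx bx; apply: NNPP => h; apply: (H x dx bx).
apply: (blockmax wu dx bx) => y dy by_; apply: (w_lt_le wu dx dy) => xy.
by apply: h; exists y.
Qed.

Lemma decA b : ~ hasmax u -> pi (cw u b) = pi (cw (restrict u (Dp u)) (om_omega pi b)).
Proof.
move=> nhm; rewrite dec0.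
apply: (pi_ext Hom).
- by apply: sub_word wu _; apply: L1d.
- apply: cw_word; exact: restrict_word.
- move=> i /=; split; first by move=> Li; split; [exact: L1d|split=> // -[]].
  by move=> [_ []].
- by [].
- move=> p Lp /=; apply: omega_block => //; apply: nomax_block => // x dx bx xmax.
  apply: nhm; exists x; split=> // y dy xy; case: (xmax y dy) => [yx|e].
    exact: (w_asym wu dx dy xy yx).
  by rewrite e in xy; exact: (w_irr wu dx xy).
Qed.

Lemma decB b m : wdom u m -> (forall y, wdom u y -> lew u y m) ->
  pi (cw u b) = om_mul pi (pi (cw (restrict u (Dp u)) (om_omega pi b))) (pi (restrict (cw u b) (blk u (fl u m)))).
Proof.
move=> dm mmax; rewrite dec0; set p0 := fl u m.
have [Lp0 _ _] := flP wu dm.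
have hm : hasmax u.
  exists m; split=> // y dy my; case: (mmax y dy) => [ym|e].
    exact: (w_asym wu dm dy my ym).
  by rewrite e in my; exact: (w_irr wu dm my).
have p0max : forall r, L1 u r -> lew u r p0.
  move=> r Lr; apply: fl_above => //; apply: mmax; exact: L1d.
have mL1 : forall x, maxL1 u x <-> L1 u x /\ x = p0.
  move=> x; split.
    move=> [Lx hx]; split=> //; case: (p0max x Lx) => // xp; case: (hx _ Lp0 xp).
  move=> [Lx ->]; split=> // y Ly py; case: (p0max y Ly) => [yp|e].
    exact: (w_asym wu (L1d Lp0) (L1d Ly) py yp).
  by rewrite e in py; exact: (w_irr wu (L1d Lp0) py).
have wE : is_word (RWord (L1 u) (word u) (fun p => pi (restrict (cw u b) (blk u p)))).
  by apply: sub_word wu _; apply: L1d.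
rewrite (pi_split Hom (Q := fun i => i = p0) wE); last first.
  move=> i j di dj ij e; subst i; case: (p0max j dj) => // jp.
  by case: (w_asym wu (L1d di) (L1d dj) ij jp).
congr om_mul.
  apply: (pi_ext Hom); try ww.
  - move=> i /=; split.
      move=> [Li np]; split; first exact: L1d.
      by split=> // -[_ /mL1 [_ e]].
    by move=> [_ [Li h]]; split=> // e; apply: h; split=> //; apply/mL1.
  - by [].
  - move=> p [Lp np] /=; apply: omega_block => //; apply: nomax_block => // x dx bx xmax.
    apply: np; have e : x = m.
      apply: (w_antisym wu dx dm); [exact: mmax|exact: xmax].
    by rewrite -bx e.
rewrite (@pi_single _ _ Hom _ p0) //; first ww.
by move=> j [_ e].
Qed.
End Dec.

Definition BS S (u : rword S) c := exists v, [/\ maxL1 u v, Pch u c v & ~ Pch u c.+1 v].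

Definition approx (M : finType) (pi : rword M -> M) (sharp : M -> M) (u : rword M) (b : M) : M :=
  foldr (fun c acc => if pb (BS u c) then om_pow pi b c.+1 else acc) (sharp b) (iota 0 #|M|`!).

Fixpoint rhoN (M : finType) (pi : rword M -> M) (sharp : M -> M) (n : nat) (b : M) (u : rword M) : M :=
  if pb (exists i, wdom u i) then
    if n is n'.+1 then
      if pb (hasmax u) then om_mul pi (rhoN pi sharp n' (om_omega pi b) (restrict u (Dp u))) (approx pi sharp u b)
      else rhoN pi sharp n' (om_omega pi b) (restrict u (Dp u))
    else b
  else om_one pi b.

Section Bound.
Variables (M : finType) (pi : rword M -> M) (le : rel M) (sharp : M -> M).
Hypothesis Hom : ordinal_monoid pi.
Hypothesis Hord : ordered_om pi le.
Hypothesis Hmerge : merge_axioms pi le sharp.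

Lemma le_refl x : le x x. Proof. by case: Hord. Qed.

Lemma le_mul x x' y y' : le x x' -> le y y' -> le (om_mul pi x y) (om_mul pi x' y').
Proof.
move=> hx hy; case: Hord => _ _ _ H; apply: H => //; first exact: nat_word.
by move=> [|i] /=.
Qed.

Lemma maxL1_p0 (u : rword M) m : is_word u -> wdom u m -> (forall y, wdom u y -> lew u y m) ->
  forall x, maxL1 u x <-> x = fl u m.
Proof.
move=> wu dm mmax; have [Lp0 _ _] := flP wu dm.
have p0max : forall r, L1 u r -> lew u r (fl u m).
  move=> r Lr; apply: fl_above => //; apply: mmax; exact: L1d.
move=> x; split.
  move=> [Lx hx]; case: (p0max x Lx) => // xp; case: (hx _ Lp0 xp).
move=> ->; split=> // y Ly py; case: (p0max y Ly) => [yp|e].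
  exact: (w_asym wu (L1d Lp0) (L1d Ly) py yp).
by rewrite e in py; exact: (w_irr wu (L1d Lp0) py).
Qed.

Lemma bound n : forall b, om_omega pi (xs pi b n) = xs pi b n ->
  forall u, is_word u -> le (pi (cw u b)) (rhoN pi sharp n b u).
Proof.
elim: n => [|n IH] b hb u wu.
  rewrite /=; case: pbP => [ne|em].
    by rewrite (@stable_word _ _ Hom b hb (cw u b)) //; exact: le_refl.
  rewrite (pi_empty Hom b); [exact: le_refl|exact: cw_word|by move=> i di; apply: em; exists i].
rewrite /=; case: pbP => [ne|em]; last first.
  rewrite (pi_empty Hom b); [exact: le_refl|exact: cw_word|by move=> i di; apply: em; exists i].
have hb' : om_omega pi (xs pi (om_omega pi b) n) = xs pi (om_omega pi b) n.
  by move: hb; rewrite /xs -iterSr.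
case: pbP => [[m [dm hm]]|nhm].
  have mmax : forall y, wdom u y -> lew u y m by move=> y dy; apply: (w_lt_le wu dm dy); apply: hm.
  rewrite (decB Hom wu b dm mmax); apply: le_mul; first by apply: IH => //; ww.
  have [c [-> hc]] := finite_block Hom wu b dm mmax.
  have BSc : forall c', BS u c' <-> c' = c.
    move=> c'; split.
      move=> [v [/(maxL1_p0 wu dm mmax) -> h1 h2]]; move/hc: h1; rewrite hc in h2; lia.
    move=> ->; exists (fl u m); split; first by apply/(maxL1_p0 wu dm mmax).
      by apply/hc.
    by rewrite hc ltnn.
  have fo : forall s, foldr (fun c acc => if pb (BS u c) then om_pow pi b c.+1 else acc) (sharp b) s =
      if c \in s then om_pow pi b c.+1 else sharp b.
    elim=> [|c' s IHs] //=; rewrite in_cons IHs; case: pbP => /BSc h.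
      by subst c'; rewrite eqxx.
    by case: eqP => // e; case: h.
  rewrite /approx fo mem_iota /=; case: ltnP => cN; first exact: le_refl.
  case: Hmerge => _ H _ _ _; have := H b (c.+1 - #|M|`!).
  by rewrite /om_bang_plus subnKC //; apply: leqW.
by rewrite (decA Hom wu) //; apply: IH => //; ww.
Qed.
End Bound.

Ltac simp_eq := repeat match goal with
 | |- context [?a == ?b :> nat] =>
   let E := fresh "E" in
   first [ assert (E : (a == b) = false) by (apply/eqP; lia)
         | assert (E : (a == b) = true) by (apply/eqP; lia) ]; rewrite E; clear E
 end.

Section FO.
Variable S : Type.
Implicit Types (u : rword S) (nu : nat -> nat).

Definition fTrue : fo S := FNot FFalse.
Definition fOr (p q : fo S) := FNot (FAnd (FNot p) (FNot q)).
Definition fImp (p q : fo S) := FNot (FAnd p (FNot q)).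
Definition fAll x (p : fo S) := FNot (FEx x (FNot p)).

Lemma sat_true u nu : fo_sat u nu fTrue. Proof. by []. Qed.
Lemma sat_or u nu p q : fo_sat u nu (fOr p q) <-> fo_sat u nu p \/ fo_sat u nu q.
Proof.
rewrite /=; split.
  by move=> h; apply: NNPP => nh; apply: h; split=> hh; apply: nh; [left|right].
by case=> h [h1 h2]; [apply: h1|apply: h2].
Qed.
Lemma sat_imp u nu p q : fo_sat u nu (fImp p q) <-> (fo_sat u nu p -> fo_sat u nu q).
Proof. by rewrite /=; split=> [h hp|h [hp]]; [apply: NNPP => hq; apply: h|apply; apply: h]. Qed.
Lemma sat_all u nu x p : fo_sat u nu (fAll x p) <->
  forall i, wdom u i -> fo_sat u (fun y => if y == x then i else nu y) p.
Proof.
rewrite /=; split=> [h i di|h [i [di hn]]]; last by apply: hn; apply: h.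
by apply: NNPP => hn; apply: h; exists i.
Qed.

Definition L1f x : fo S :=
  fAll x.+1 (fImp (FLt _ x.+1 x) (FEx x.+2 (FAnd (FLt _ x.+1 x.+2) (FLt _ x.+2 x)))).


Lemma L1f_sem u nu x : wdom u (nu x) -> (fo_sat u nu (L1f x) <-> L1 u (nu x)).
Proof.
move=> dx; rewrite /L1f sat_all; split.
  move=> h; split=> // y dy yx; have := h y dy; rewrite sat_imp /=; simp_eq.
  by move=> /(_ yx) [z [dz]]; simp_eq => -[h1 h2]; exists z.
move=> [_ h] i di; rewrite sat_imp /=; simp_eq => ix.
by have [z [dz iz zx]] := h i di ix; exists z; simp_eq.
Qed.

Definition maxL1f x : fo S :=
  FAnd (L1f x) (fAll x.+3 (fImp (L1f x.+3) (FNot (FLt _ x x.+3)))).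

Opaque L1f fAll fImp.
Lemma maxL1f_sem u nu x : wdom u (nu x) -> (fo_sat u nu (maxL1f x) <-> maxL1 u (nu x)).
Proof.
move=> dx; rewrite /maxL1f /= (L1f_sem dx) sat_all.
split=> -[h1 h2]; split=> // i.
  move=> Li; have di := L1d Li; have := h2 i di; rewrite sat_imp /=.
  have e : forall y, (if y == x.+3 then i else nu y) = (fun y => if y == x.+3 then i else nu y) y by [].
  rewrite L1f_sem /=; simp_eq => //; by move=> /(_ Li).
move=> di; rewrite sat_imp L1f_sem /=; simp_eq => //; exact: h2.
Qed.

Definition hasmaxf : fo S := FEx 0 (fAll 1 (FNot (FLt _ 0 1))).
Opaque maxL1f.
Lemma hasmaxf_sem u nu : fo_sat u nu hasmaxf <-> hasmax u.
Proof.
rewrite /hasmaxf /=; split=> -[m [dm h]]; exists m; split=> //.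
  by move=> y dy; move/sat_all: h => /(_ y dy) /=.
by apply/sat_all => y dy /=; apply: h.
Qed.

Opaque hasmaxf.
Definition Dpf x : fo S := FAnd (L1f x) (FNot (FAnd hasmaxf (maxL1f x))).
Lemma Dpf_sem u nu x : wdom u (nu x) -> (fo_sat u nu (Dpf x) <-> Dp u (nu x)).
Proof.
move=> dx; rewrite /Dpf /= (L1f_sem dx) hasmaxf_sem (maxL1f_sem dx).
by rewrite /Dp.
Qed.

Fixpoint Hf c x : fo S := if c is c'.+1 then FEx x.+1 (FAnd (FLt _ x x.+1) (Hf c' x.+1)) else fTrue.
Lemma Hf_sem u c : forall x nu, fo_sat u nu (Hf c x) <-> Pch u c (nu x).
Proof.
elim: c => [|c IH] x nu /=; first by split=> // _ [].
split.
  by move=> [i [di h]]; move: h; rewrite IH /=; simp_eq => -[h1 h2]; exists i; split.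
by move=> [i [di h1 h2]]; exists i; split=> //; rewrite IH /=; simp_eq; split.
Qed.

Opaque Hf.
Definition BSf c : fo S := FEx 0 (FAnd (maxL1f 0) (FAnd (Hf c 0) (FNot (Hf c.+1 0)))).
Lemma BSf_sem u nu c : fo_sat u nu (BSf c) <-> BS u c.
Proof.
rewrite /BSf /=; split.
  move=> [v [dv h]]; move: h; rewrite !Hf_sem maxL1f_sem //= => -[h1 [h2 h3]]; by exists v.
move=> [v [mv h1 h2]]; have dv : wdom u v by case: mv => /L1d.
exists v; split=> //; rewrite !Hf_sem maxL1f_sem //=.
Qed.
End FO.

Transparent L1f fAll fImp maxL1f hasmaxf Hf.

Section Free.
Variable S : Type.
Lemma L1f_free z x : fo_free z (L1f S x) -> z = x.
Proof. rewrite /L1f /fAll /fImp /=. move=> h; apply/eqP; move: h; lia. Qed.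
Lemma maxL1f_free z x : fo_free z (maxL1f S x) -> z = x.
Proof.
rewrite /maxL1f /fAll /fImp /= => /orP[/L1f_free //|/andP[h1 /orP[/L1f_free|h2]]].
  by move=> e; rewrite e eqxx in h1.
by move/eqP: h1; move: h2; lia.
Qed.
Lemma hasmaxf_free z : ~~ fo_free z (hasmaxf S).
Proof. rewrite /hasmaxf /fAll /=; lia. Qed.
Lemma Hf_free c : forall z x, fo_free z (Hf S c x) -> z = x.
Proof.
elim: c => [|c IH] z x.
  by rewrite (_ : Hf S 0 x = fTrue S).
rewrite (_ : Hf S c.+1 x = FEx x.+1 (FAnd (FLt _ x x.+1) (Hf S c x.+1))) //=.
move=> /andP[h1 /orP[h2|/IH h3]]; last by rewrite h3 eqxx in h1.
by move/eqP: h1; move: h2; lia.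
Qed.
Lemma Dpf_free z x : fo_free z (Dpf S x) -> z = x.
Proof.
rewrite /Dpf /= => /orP[/L1f_free //|/orP[h|/maxL1f_free //]].
by move: h; lia.
Qed.
Lemma BSf_sent c : fo_sentence (BSf S c).
Proof.
move=> z; rewrite /BSf /=; apply/negP => /andP[h1 /orP[h|/orP[h|h]]].
- by move: (maxL1f_free h) h1 => ->.
- by move: (Hf_free h) h1 => ->.
- move: h => /andP[h2 /orP[h3|/Hf_free h3]]; first by move: h1 h2 h3; lia.
  by move: h2; rewrite h3 eqxx.
Qed.
Lemma hasmaxf_sent : fo_sentence (hasmaxf S).
Proof. by move=> z; apply: hasmaxf_free. Qed.

Definition nef : fo S := FEx 0 (fTrue S).
Lemma nef_sent : fo_sentence nef. Proof. by move=> z /=; rewrite andbF. Qed.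
Lemma nef_sem u nu : fo_sat u nu nef <-> exists i, wdom u i.
Proof. by rewrite /=; split; [move=> [i [di _]]; exists i|move=> [i di]; exists i; split=> // -[]]. Qed.

Definition allaf (a : S) : fo S := fAll 0 (FLab a 0).
Lemma allaf_sent a : fo_sentence (allaf a). Proof. by move=> z; rewrite /allaf /fAll /=; lia. Qed.
Lemma allaf_sem u nu a : fo_sat u nu (allaf a) <-> forall i, wdom u i -> wlab u i = a.
Proof. by rewrite sat_all. Qed.

Fixpoint relf (d : nat -> fo S) (p : fo S) : fo S :=
  match p with
  | FEx x q => FEx x (FAnd (d x) (relf d q))
  | FNot q => FNot (relf d q)
  | FAnd q r => FAnd (relf d q) (relf d r)
  | q => q
  end.

Lemma rel_sem (d : nat -> fo S) (u : rword S) (D : nat -> Prop) :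
  (forall nu x, wdom u (nu x) -> (fo_sat u nu (d x) <-> D (nu x))) ->
  forall p nu, fo_sat u nu (relf d p) <-> fo_sat (restrict u D) nu p.
Proof.
move=> hd; elim=> [x y|x y|s x||p IH|p IHp q IHq|x p IH] nu //=.
- by rewrite IH.
- by rewrite IHp IHq.
- split=> -[i [di h]]; exists i.
    case: h => h1 h2; split; last by rewrite -IH.
    by split=> //; move: h1; rewrite hd /= eqxx.
  case: di => di Di; split=> //; split; last by rewrite IH.
  by rewrite hd /= eqxx.
Qed.

Lemma rel_free (d : nat -> fo S) : (forall z x, fo_free z (d x) -> z = x) ->
  forall p z, fo_free z (relf d p) -> fo_free z p.
Proof.
move=> hd; elim=> [x y|x y|s x||p IH|p IHp q IHq|x p IH] z //=.
- exact: IH.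
- by move=> /orP[/IHp ->|/IHq ->]; rewrite ?orbT.
- move=> /andP[h1 /orP[/hd e|/IH ->]]; last by rewrite h1.
  by rewrite e eqxx in h1.
Qed.

Lemma rel_sent d p : (forall z x, fo_free z (d x) -> z = x) -> fo_sentence p -> fo_sentence (relf d p).
Proof. by move=> hd hp z; apply/negP => /(rel_free hd) h; have := hp z; rewrite h. Qed.
End Free.

Definition agree S (L : seq (fo S)) (u v : rword S) :=
  forall p, List.In p L -> (fo_sat u (fun _ => 0) p <-> fo_sat v (fun _ => 0) p).
Definition Inv S T (F : rword S -> T) := exists L : seq (fo S),
  (forall p, List.In p L -> fo_sentence p) /\
  forall u v, is_word u -> is_word v -> agree L u v -> F u = F v.

Lemma pb_ext P Q : (P <-> Q) -> pb P = pb Q.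
Proof. by move=> h; case: pbP => p; case: pbP => q //; [case: q; apply/h|case: p; apply/h]. Qed.

Lemma agree_sym S L (u v : rword S) : agree L u v -> agree L v u.
Proof. by move=> h p /h ->. Qed.
Lemma agree_trans S L (u v w : rword S) : agree L u v -> agree L v w -> agree L u w.
Proof. by move=> h1 h2 p hp; rewrite (h1 p hp) (h2 p hp). Qed.

Lemma sent_or S (p q : fo S) : fo_sentence p -> fo_sentence q -> fo_sentence (fOr p q).
Proof. by move=> hp hq z /=; rewrite (negbTE (hp z)) (negbTE (hq z)). Qed.
Lemma sent_and S (p q : fo S) : fo_sentence p -> fo_sentence q -> fo_sentence (FAnd p q).
Proof. by move=> hp hq z /=; rewrite (negbTE (hp z)) (negbTE (hq z)). Qed.
Lemma sent_not S (p : fo S) : fo_sentence p -> fo_sentence (FNot p).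
Proof. by move=> hp z /=. Qed.

Lemma defin S (L : seq (fo S)) : (forall p, List.In p L -> fo_sentence p) ->
  forall Q : rword S -> Prop, (forall u v, is_word u -> is_word v -> agree L u v -> Q u -> Q v) ->
  fo_definable Q.
Proof.
elim: L => [|p L IH] hs Q hQ.
  case: (classic (exists u, is_word u /\ Q u)) => [[u0 [w0 q0]]|nq].
    exists (fTrue S); split; first by move=> z.
    move=> u wu; split=> _; first by move=> [].
    exact: (hQ u0 u w0 wu (fun q hq => match hq with end) q0).
  exists FFalse; split; first by move=> z.
  by move=> u wu; split=> // qu; apply: nq; exists u.
have hsL : forall q, List.In q L -> fo_sentence q by move=> q hq; apply: hs; right.
have hp : fo_sentence p by apply: hs; left.
pose Q1 u := exists v, [/\ is_word v, Q v, fo_sat v (fun _ => 0) p & agree L u v].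
pose Q2 u := exists v, [/\ is_word v, Q v, ~ fo_sat v (fun _ => 0) p & agree L u v].
have [psi1 [s1 h1]] : fo_definable Q1.
  apply: IH => // u v wu wv huv [w [ww qw sw ag]]; exists w; split=> //.
  exact: agree_trans (agree_sym huv) ag.
have [psi2 [s2 h2]] : fo_definable Q2.
  apply: IH => // u v wu wv huv [w [ww qw sw ag]]; exists w; split=> //.
  exact: agree_trans (agree_sym huv) ag.
exists (fOr (FAnd p psi1) (FAnd (FNot p) psi2)); split.
  by apply: sent_or; apply: sent_and => //; apply: sent_not.
move=> u wu; rewrite sat_or /=; split.
  move=> qu; case: (classic (fo_sat u (fun _ => 0) p)) => sp.
    left; split=> //; apply/h1 => //; exists u; split=> // q _.
  right; split=> //; apply/h2 => //; exists u; split=> // q _.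
have back : forall v, is_word v -> Q v -> agree L u v ->
    (fo_sat u (fun _ => 0) p <-> fo_sat v (fun _ => 0) p) -> Q u.
  move=> v wv qv ag e; apply: (hQ v u wv wu _ qv).
  move=> q [<-|hq]; first by rewrite e.
  by rewrite (ag q hq).
case=> [[sp hq]|[sp hq]].
  have [v [wv qv sv ag]] := proj2 (h1 u wu) hq.
  by apply: (back v wv qv ag); split=> _.
have [v [wv qv sv ag]] := proj2 (h2 u wu) hq.
by apply: (back v wv qv ag); split=> h; [case: sp|case: sv].
Qed.

Section InvR.
Variables (M : finType) (pi : rword M -> M) (sharp : M -> M).

Lemma in_app_l S (x : S) l1 l2 : List.In x l1 -> List.In x (l1 ++ l2).
Proof. by move=> h; apply: List.in_or_app; left. Qed.
Lemma in_app_r S (x : S) l1 l2 : List.In x l2 -> List.In x (l1 ++ l2).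
Proof. by move=> h; apply: List.in_or_app; right. Qed.

Lemma inIn (T : eqType) (x : T) s : x \in s -> List.In x s.
Proof. by elim: s => //= y s IH; rewrite in_cons => /orP[/eqP->|/IH]; auto. Qed.

Lemma Inv_rhoN n : forall b, Inv (rhoN pi sharp n b).
Proof.
elim: n => [|n IH] b.
  exists [:: nef M]; split.
    by move=> p [<-|[]]; apply: nef_sent.
  move=> u v wu wv ag /=; congr (if _ then _ else _).
  by apply: pb_ext; rewrite -!(nef_sem _ (fun _ => 0)); apply: ag; left.
have [L [sL hL]] := IH (om_omega pi b).
exists [:: nef M, hasmaxf M & map (BSf M) (iota 0 #|M|`!) ++ map (@relf M (Dpf M)) L]; split.
  move=> p [<-|[<-|h]]; [exact: nef_sent|exact: hasmaxf_sent|].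
  case: (List.in_app_or _ _ _ h) => h'.
    by move/List.in_map_iff: h' => [c [<- _]]; exact: BSf_sent.
  move/List.in_map_iff: h' => [q [<- hq]].
  by apply: rel_sent; [exact: Dpf_free|exact: sL].
move=> u v wu wv ag /=.
have e1 : pb (exists i, wdom u i) = pb (exists i, wdom v i).
  by apply: pb_ext; rewrite -!(nef_sem _ (fun _ => 0)); apply: ag; left.
have e2 : pb (hasmax u) = pb (hasmax v).
  by apply: pb_ext; rewrite -!(hasmaxf_sem _ (fun _ => 0)); apply: ag; right; left.
have e3 : rhoN pi sharp n (om_omega pi b) (restrict u (Dp u)) = rhoN pi sharp n (om_omega pi b) (restrict v (Dp v)).
  apply: hL; try ww.
  move=> q hq.
  have hu := @rel_sem _ (Dpf M) u (Dp u) (fun nu x dx => Dpf_sem dx) q (fun _ => 0).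
  have hv := @rel_sem _ (Dpf M) v (Dp v) (fun nu x dx => Dpf_sem dx) q (fun _ => 0).
  rewrite -hu -hv; apply: ag; right; right; apply: in_app_r.
  by apply/List.in_map_iff; exists q.
have e4 : approx pi sharp u b = approx pi sharp v b.
  rewrite /approx.
  have : forall c, c \in iota 0 #|M|`! -> pb (BS u c) = pb (BS v c).
    move=> c hc; apply: pb_ext; rewrite -!(BSf_sem _ (fun _ => 0)); apply: ag; right; right.
    apply: in_app_l; apply/List.in_map_iff; exists c; split=> //.
    exact: inIn.
  elim: (iota 0 #|M|`!) => //= c s IHs h.
  rewrite IHs; last by move=> c' hc'; apply: h; rewrite in_cons hc' orbT.
  by rewrite h // in_cons eqxx.
by rewrite e1 e2 e3 e4.
Qed.
End InvR.

Theorem lemma5p11 (M : finType) (pi : rword M -> M) (le : rel M) (sharp : M -> M) :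
  ordinal_monoid pi -> ordered_om pi le -> merge_axioms pi le sharp ->
  forall a : M, exists rho : rword M -> M, fo_approximant pi le (a_ord a) rho.
Proof.
move=> Hom Hord Hmerge a.
exists (rhoN pi sharp #|M| a); split.
- apply: (@defin _ [:: allaf a]); first by move=> p [<-|[]]; apply: allaf_sent.
  move=> u v wu wv ag [_ lab]; split=> //; apply/(allaf_sem v (fun _ => 0)).
  by apply/(ag _ (or_introl erefl)); apply/allaf_sem.
- move=> m; have [L [sL hL]] := Inv_rhoN pi sharp #|M| a.
  apply: (@defin _ (allaf a :: L)); first by move=> p [<-|hp]; [apply: allaf_sent|apply: sL].
  move=> u v wu wv ag [[_ lab] e]; split.
    split=> //; apply/(allaf_sem v (fun _ => 0)).
    by apply/(ag _ (or_introl erefl)); apply/allaf_sem.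
  rewrite -e; symmetry; apply: hL => // p hp; apply: ag; right; exact: hp.
- move=> u [wu lab].
  have := @bound M pi le sharp Hom Hord Hmerge #|M| a (stab Hom a) u wu.
  suff -> : pi u = pi (cw u a) by [].
  by apply: (pi_ext Hom) => //; exact: cw_word.
Qed.
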